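(* For every integer $t_1\geq 2$, setting $t_2=t_1+1$, there exist a connected graph $G$ and a function $g:A\to B$ such that $fix(G)=t_1$ and $fix(F_G)=t_2$.
   Context: A set $S\subseteq V(H)$ is a fixing set of a graph $H$ if the only automorphism of $H$ fixing every vertex of $S$ is the identity; $fix(H)$ is the minimum cardinality of a fixing set of $H$. Functigraph: let $G_1,G_2$ be disjoint copies of a connected graph $G$, with $A=V(G_1)$, $B=V(G_2)$, and let $g:A\to B$ be a function. The functigraph $F_G$ has vertex set $A\cup B$ and edge set $E(G_1)\cup E(G_2)\cup\{ug(u):u\in A\}$. *)

(* Defs.v *)
From mathcomp Require Import all_boot all_fingroup.
Set Implicit Arguments. Unset Strict Implicit. Unset Printing Implicit Defensive.

Definition simple_graph (T : finType) (e : rel T) : Prop :=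
  symmetric e /\ irreflexive e.

Definition connected_graph (T : finType) (e : rel T) : Prop :=
  forall x y : T, connect e x y.

Definition is_autb (T : finType) (e : rel T) (s : {perm T}) : bool :=
  [forall x, [forall y, e (s x) (s y) == e x y]].

Definition fixingb (T : finType) (e : rel T) (S : {set T}) : bool :=
  [forall s : {perm T}, (is_autb e s && [forall x in S, s x == x]) ==> (s == 1%g)].

(* fix(H): minimum cardinality of a fixing set ([set: T] is always fixing) *)
Definition fixn (T : finType) (e : rel T) : nat :=
  #|[arg min_(S < [set: T] | fixingb e S) #|S|]|.

(* Functigraph: vertex set A + B, two copies of G (inl = A, inr = B),
   plus edges u -- g u for u in A. *)
Definition functigraph (T : finType) (e : rel T) (g : T -> T) : rel (T + T) :=
  fun x y =>
    match x, y with
    | inl u, inl v => e u v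
    | inr u, inr v => e u v
    | inl u, inr w => g u == w
    | inr w, inl u => g u == w
    end.

(* Main.v *)
Require Import Defs.
From mathcomp Require Import all_boot all_fingroup zify.
Set Implicit Arguments. Unset Strict Implicit. Unset Printing Implicit Defensive.

Section Gen.
Variable T : finType.
Variable e : rel T.

Lemma autP (s : {perm T}) : is_autb e s -> forall x y, e (s x) (s y) = e x y.
Proof. by move=> /forallP H x y; apply/eqP; apply: (forallP (H x) y). Qed.

Lemma autI (s : {perm T}) : (forall x y, e (s x) (s y) = e x y) -> is_autb e s.
Proof. by move=> H; apply/forallP=> x; apply/forallP=> y; rewrite H. Qed.

Lemma fixingP (S : {set T}) : fixingb e S <->
  (forall s : {perm T}, is_autb e s -> (forall x, x \in S -> s x = x) -> s = 1%g).
Proof.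
split.
- move=> /forallP H s Ha Hs; apply/eqP; move/implyP: (H s); apply.
  rewrite Ha /=; apply/forall_inP => x xS; by rewrite Hs.
- move=> H; apply/forallP => s; apply/implyP => /andP [Ha /forall_inP Hs].
  apply/eqP; apply: H => // x xS; exact/eqP/Hs.
Qed.

Lemma notfixing (S : {set T}) (s : {perm T}) : is_autb e s -> (forall x, x \in S -> s x = x) ->
  s != 1%g -> ~~ fixingb e S.
Proof.
move=> Ha Hs Hn; apply/negP => /fixingP H; by rewrite (H s Ha Hs) eqxx in Hn.
Qed.

Lemma fixn_eq N : (exists S, fixingb e S /\ #|S| = N) ->
  (forall S : {set T}, fixingb e S -> N <= #|S|) -> fixn e = N.
Proof.
move=> [S0 [HS0 HN]] Hlb; rewrite /fixn.
case: arg_minnP.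
- apply/fixingP => s _ Hs; apply/permP => x; rewrite perm1; apply: Hs; by rewrite inE.
- move=> S HS Hmin; apply/eqP; rewrite eqn_leq Hlb // andbT -HN; exact: Hmin.
Qed.

Lemma prof (s : {perm T}) (P : pred T) x : is_autb e s -> (forall z, P z -> s z = z) ->
  (forall y, ~~ P y -> (forall z, P z -> e y z = e x z) -> y = x) -> s x = x.
Proof.
move=> Ha HP Hu; case Px : (P (s x)).
- exact: perm_inj (HP _ Px).
- apply: Hu; first by rewrite Px.
  move=> z Pz; by have := autP Ha x z; rewrite (HP z Pz).
Qed.

Lemma last_fixed (s : {perm T}) x : (forall y, y != x -> s y = y) -> s x = x.
Proof.
move=> H; case: (eqVneq (s x) x) => // ne.
exact: perm_inj (H _ ne).
Qed.

Lemma le_compl1 (X : {set T}) : (forall i j, i \notin X -> j \notin X -> i = j) ->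
  #|T| <= #|X|.+1.
Proof.
move=> H; rewrite -(cardsC X) -addn1 leq_add2l.
apply/card_le1_eqP => i j; rewrite !inE => Hi Hj; exact: H.
Qed.

End Gen.

Section Card.
Lemma card_sumS (A B : finType) (S : {set A + B}) :
  #|S| = #|[set x | inl x \in S]| + #|[set y | inr y \in S]|.
Proof.
have il : injective (@inl A B) by move=> ? ? [].
have ir : injective (@inr A B) by move=> ? ? [].
have n1 : forall x (Y : {set B}), (@inl A B x \in inr @: Y) = false.
  by move=> x Y; apply/negP => /imsetP [? _ //].
have n2 : forall y (X : {set A}), (@inr A B y \in inl @: X) = false.
  by move=> y X; apply/negP => /imsetP [? _ //].
have HS : S = inl @: [set x | inl x \in S] :|: inr @: [set y | inr y \in S].
  apply/setP => [[x|y]]; rewrite in_setU ?n1 ?n2 ?(mem_imset _ _ il) ?(mem_imset _ _ ir) !inE ?orbF //.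
rewrite {1}HS cardsU !card_imset //.
suff -> : inl @: [set x | inl x \in S] :&: inr @: [set y | inr y \in S] = set0.
  by rewrite cards0 subn0.
apply/setP => [[x|y]]; by rewrite !inE ?n1 ?n2 ?andbF.
Qed.

Lemma card_optS (A : finType) (S : {set option A}) :
  #|S| = (None \in S) + #|[set x | Some x \in S]|.
Proof.
have si : injective (@Some A) by move=> ? ? [].
have n1 : forall (Y : {set A}), (None \in Some @: Y) = false.
  by move=> Y; apply/negP => /imsetP [? _ //].
have HS : S = (if None \in S then [set None] else set0) :|: Some @: [set x | Some x \in S].
  apply/setP => [[x|]]; rewrite in_setU ?n1 ?(mem_imset _ _ si).
  - by case: ifP; rewrite !inE.
  - by case: ifP => H; rewrite ?inE ?H.
rewrite {1}HS cardsU card_imset //.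
case: ifP => H; rewrite ?cards1 ?cards0 ?set0I ?cards0 ?subn0 //.
suff -> : [set None] :&: Some @: [set x | Some x \in S] = set0 by rewrite cards0 subn0.
apply/setP => [[x|]]; by rewrite !inE ?n1 ?andbF.
Qed.
End Card.

Lemma tperm_nt (T : finType) (a b : T) : a != b -> tperm a b != 1%g.
Proof.
move=> ab; apply/eqP => H; have := congr1 (fun p : {perm T} => p a) H.
by rewrite tpermL perm1 => /eqP; rewrite eq_sym (negbTE ab).
Qed.

Section Star.
Variable L : finType.
Definition star : rel (option L) := fun x y => (x == None) != (y == None).

Lemma star_simple : simple_graph star.
Proof. split; [by move=> x y; rewrite /star eq_sym | by move=> x; rewrite /star eqxx]. Qed.

Lemma star_conn : connected_graph star.
Proof.
move=> [a|] [b|].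
- apply: (@connect_trans _ _ None); apply: connect1; by [].
- by apply: connect1.
- by apply: connect1.
- exact: connect0.
Qed.

Lemma star_aut (s : {perm (option L)}) : s None = None -> is_autb star s.
Proof.
move=> HN; apply: autI => x y.
have sx : forall z, (s z == None) = (z == None).
  by move=> z; rewrite -{1}HN (inj_eq perm_inj).
by rewrite /star !sx.
Qed.

Lemma star_fix (l0 l1 : L) : l0 != l1 -> fixn star = #|L|.-1.
Proof.
move=> l01; apply: fixn_eq.
- exists (~: [set None; Some l0]); split; last first.
    by rewrite cardsCs setCK cards2 card_option /= subSS subn1.
  apply/fixingP => s Ha Hs.
  have Hn : s None = None.
    apply: (@prof _ star s (fun z => z \in ~: [set None; Some l0])) => //.
    move=> y; rewrite !inE negbK => /orP [/eqP -> //|/eqP ->] H.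
    have l10 : Some l1 != Some l0 by rewrite (inj_eq (@Some_inj _)) eq_sym.
    by have := H (Some l1); rewrite !inE /= l10 => /(_ isT).
  apply/permP => x; rewrite perm1.
  case: (eqVneq x (Some l0)) => [->|nx].
  + apply: last_fixed => y ny; case: (eqVneq y None) => [->//|yn].
    apply: Hs; by rewrite !inE negb_or yn.
  + case: (eqVneq x None) => [->//|xn]; apply: Hs; by rewrite !inE negb_or xn.
- move=> S HS; rewrite (card_optS S).
  have : #|L| <= #|[set x | Some x \in S]|.+1.
    apply: le_compl1 => i j; rewrite !inE => Hi Hj.
    case: (eqVneq i j) => // ij; exfalso.
    move: HS; apply/negP; apply: (@notfixing _ star S (tperm (Some i) (Some j))).
    + by apply: star_aut; rewrite tpermD.
    + move=> x xS; apply: tpermD; apply/eqP => ex; subst x; by rewrite ?xS in Hi Hj.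
    + apply: tperm_nt; by rewrite (inj_eq (@Some_inj _)).
  case: #|L| => // n /=; rewrite ltnS => H; exact: leq_trans H (leq_addl _ _).
Qed.
End Star.

Section SumPerm.
Variables (T : finType) (e : rel T) (g : T -> T).
Definition sumf (p1 p2 : {perm T}) (v : T + T) : T + T :=
  match v with inl x => inl (p1 x) | inr y => inr (p2 y) end.
Lemma sumf_inj p1 p2 : injective (sumf p1 p2).
Proof. by move=> [x|x] [y|y] //= [/perm_inj ->]. Qed.
Definition sperm p1 p2 : {perm T + T} := perm (@sumf_inj p1 p2).
Lemma spermE p1 p2 v : sperm p1 p2 v = sumf p1 p2 v.
Proof. by rewrite permE. Qed.
Lemma sperm_aut p1 p2 : is_autb e p1 -> is_autb e p2 ->
  (forall x, g (p1 x) = p2 (g x)) -> is_autb (functigraph e g) (sperm p1 p2).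
Proof.
move=> H1 H2 Hg; apply: autI => [[x|x] [y|y]]; rewrite !spermE /=.
- exact: autP.
- by rewrite Hg (inj_eq perm_inj).
- by rewrite Hg (inj_eq perm_inj).
- exact: autP.
Qed.
End SumPerm.


Lemma ord_split n (i : 'I_n.+1) : (i < n) || (i == ord_max).
Proof. rewrite ltn_neqAle -ltnS ltn_ord andbT -(inj_eq val_inj) /=. by case: eqP. Qed.

Lemma perm_nt (T : finType) (s : {perm T}) x : s x != x -> s != 1%g.
Proof. by move=> H; apply/eqP => E; move: H; rewrite E perm1 eqxx. Qed.

Section Lower.
Variable k : nat.
Definition LL := ('I_3 + 'I_k)%type.
Definition TT := option LL.
Variable g : TT -> TT.
Let F := functigraph (@star LL) g.

Lemma card_split (S : {set TT + TT}) :
  #|[set i | inl (Some (inl i)) \in S]| + #|[set i | inr (Some (inl i)) \in S]|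
  + (#|[set j | inl (Some (inr j)) \in S]| + #|[set j | inr (Some (inr j)) \in S]|)
  <= #|S|.
Proof.
rewrite card_sumS !card_optS !card_sumS.
have e1 : forall (u : TT -> TT + TT),
  [set x | inl x \in [set x | Some x \in [set x | u x \in S]]] = [set i | u (Some (inl i)) \in S]
  by move=> u; apply/setP => i; rewrite !inE.
have e2 : forall (u : TT -> TT + TT),
  [set x | inr x \in [set x | Some x \in [set x | u x \in S]]] = [set i | u (Some (inr i)) \in S]
  by move=> u; apply/setP => i; rewrite !inE.
rewrite !e1 !e2.
set A := #|_|. set B := #|_|. set C := #|_|. set D := #|_|.
lia.
Qed.

Lemma swapA (S : {set TT + TT}) i j : fixingb F S -> i != j ->
  (forall x, g (tperm (Some (inl i)) (Some (inl j)) x) = g x) ->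
  inl (Some (inl i)) \notin S -> inl (Some (inl j)) \notin S -> False.
Proof.
move=> HS ij Hg Hi Hj; move: HS; apply/negP.
apply: (@notfixing _ F S (sperm (tperm (Some (inl i)) (Some (inl j))) 1)).
- apply: sperm_aut; [apply: star_aut; by rewrite tpermD | apply: star_aut; by rewrite perm1 |].
  by move=> x; rewrite perm1 Hg.
- move=> [x|x] xS; rewrite spermE /= ?perm1 //.
  by rewrite tpermD //; apply/eqP => ex; subst x; rewrite xS in Hi Hj.
- apply: (@perm_nt _ _ (inl (Some (inl i)))); rewrite spermE /= tpermL.
  by apply/eqP => [[ji]]; rewrite ji eqxx in ij.
Qed.

Lemma swapB (S : {set TT + TT}) i j : fixingb F S -> i != j ->
  (forall x, tperm (Some (inl i)) (Some (inl j)) (g x) = g x) ->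
  inr (Some (inl i)) \notin S -> inr (Some (inl j)) \notin S -> False.
Proof.
move=> HS ij Hg Hi Hj; move: HS; apply/negP.
apply: (@notfixing _ F S (sperm 1 (tperm (Some (inl i)) (Some (inl j))))).
- apply: sperm_aut; [apply: star_aut; by rewrite perm1 | apply: star_aut; by rewrite tpermD |].
  by move=> x; rewrite perm1 Hg.
- move=> [x|x] xS; rewrite spermE /= ?perm1 //.
  by rewrite tpermD //; apply/eqP => ex; subst x; rewrite xS in Hi Hj.
- apply: (@perm_nt _ _ (inr (Some (inl i)))); rewrite spermE /= tpermL.
  by apply/eqP => [[ji]]; rewrite ji eqxx in ij.
Qed.

Lemma swapP (S : {set TT + TT}) i j : fixingb F S -> i != j ->
  (forall x, g (tperm (Some (inr i)) (Some (inr j)) x) = tperm (Some (inr i)) (Some (inr j)) (g x)) ->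
  inl (Some (inr i)) \notin S -> inl (Some (inr j)) \notin S ->
  inr (Some (inr i)) \notin S -> inr (Some (inr j)) \notin S -> False.
Proof.
move=> HS ij Hg Hi Hj Hi' Hj'; move: HS; apply/negP.
apply: (@notfixing _ F S (sperm (tperm (Some (inr i)) (Some (inr j))) (tperm (Some (inr i)) (Some (inr j))))).
- by apply: sperm_aut => //; apply: star_aut; rewrite tpermD.
- move=> [x|x] xS; rewrite spermE /=.
  + by rewrite tpermD //; apply/eqP => ex; subst x; rewrite xS in Hi Hj.
  + by rewrite tpermD //; apply/eqP => ex; subst x; rewrite xS in Hi' Hj'.
- apply: (@perm_nt _ _ (inl (Some (inr i)))); rewrite spermE /= tpermL.
  by apply/eqP => [[ji]]; rewrite ji eqxx in ij.
Qed.
End Lower.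


Lemma ord_lt n (i : 'I_n.+1) : (i < n) = (i != ord_max).
Proof. by rewrite ltn_neqAle -ltnS ltn_ord andbT -(inj_eq val_inj). Qed.

Section GenCase.
Variable k' : nat.
Definition g1 (x : TT k'.+1) : TT k'.+1 :=
  match x with Some (inr j) => Some (inr j) | _ => None end.
Let F := functigraph (@star (LL k'.+1)) g1.

Lemma low1 (S : {set TT k'.+1 + TT k'.+1}) : fixingb F S -> k'.+4 <= #|S|.
Proof.
move=> HS; have := card_split S.
have hA : #|'I_3| <= #|[set i | inl (Some (inl i)) \in S]|.+1.
  apply: le_compl1 => i j; rewrite !inE => Hi Hj.
  case: (eqVneq i j) => // ij; exfalso; apply: (swapA HS ij _ Hi Hj).
  by move=> x; case: tpermP => [->|->|] //=.
have hB : #|'I_3| <= #|[set i | inr (Some (inl i)) \in S]|.+1.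
  apply: le_compl1 => i j; rewrite !inE => Hi Hj.
  case: (eqVneq i j) => // ij; exfalso; apply: (swapB HS ij _ Hi Hj).
  by move=> [[l|l]|] /=; rewrite tpermD.
have hP : #|'I_k'.+1| <= #|[set j | inl (Some (inr j)) \in S] :|: [set j | inr (Some (inr j)) \in S]|.+1.
  apply: le_compl1 => i j; rewrite !inE !negb_or => /andP [Hi Hi'] /andP [Hj Hj'].
  case: (eqVneq i j) => // ij; exfalso; apply: (swapP HS ij _ Hi Hj Hi' Hj').
  move=> [[l|l]|] /=.
  - by rewrite !tpermD.
  - by case: tpermP.
  - by rewrite !tpermD.
have := cardsU [set j | inl (Some (inr j)) \in S] [set j | inr (Some (inr j)) \in S].
rewrite !card_ord in hA hB hP.
lia.
Qed.

Definition inS0 (v : TT k'.+1 + TT k'.+1) : bool :=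
  match v with
  | inl (Some (inl i)) => i < 2
  | inr (Some (inl i)) => i < 2
  | inl (Some (inr j)) => j < k'
  | _ => false
  end.
Definition S0 := [set v | inS0 v].

Lemma e1 (A : finType) (k : nat) (S : {set A}) (u : TT k -> A) :
  [set x | inl x \in [set x | Some x \in [set x | u x \in S]]] = [set i | u (Some (inl i)) \in S].
Proof. by apply/setP => i; rewrite !inE. Qed.
Lemma e2 (A : finType) (k : nat) (S : {set A}) (u : TT k -> A) :
  [set x | inr x \in [set x | Some x \in [set x | u x \in S]]] = [set i | u (Some (inr i)) \in S].
Proof. by apply/setP => i; rewrite !inE. Qed.

Lemma cardS0 : #|S0| = k'.+4.
Proof.
rewrite card_sumS !card_optS !card_sumS !e1 !e2 !inE /=.
have -> : [set i | inl (Some (inl i)) \in S0] = [set~ ord_max].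
  by apply/setP => i; rewrite !inE /= ord_lt.
have -> : [set i | inr (Some (inl i)) \in S0] = [set~ ord_max].
  by apply/setP => i; rewrite !inE /= ord_lt.
have -> : [set i | inl (Some (inr i)) \in S0] = [set~ ord_max].
  by apply/setP => i; rewrite !inE /= ord_lt.
have -> : [set i | inr (Some (inr i)) \in S0] = set0.
  by apply/setP => i; rewrite !inE.
rewrite !cardsC1 cards0 !card_ord /=; lia.
Qed.

Lemma fix1 : fixingb F S0.
Proof.
apply/fixingP => s Ha Hs.
have HS z : inS0 z -> s z = z by move=> h; apply: Hs; rewrite inE.
have hcB : s (inr None) = inr None.
  apply: (@prof _ F s inS0) => // y _ H.
  move: (H (inr (Some (inl ord0))) isT); clear H.
  by case: y => [[[i|j]|]|[[i|j]|]].
have hcA : s (inl None) = inl None.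
  apply: (@prof _ F s inS0) => // y _ H.
  move: (H (inl (Some (inl ord0))) isT) (H (inr (Some (inl ord0))) isT); clear H.
  by case: y => [[[i|j]|]|[[i|j]|]].
pose P2 v := [|| inS0 v, v == inl None | v == inr None].
have HP2 z : P2 z -> s z = z.
  by move=> /or3P [/HS //| /eqP -> | /eqP ->].
have hq (j : 'I_k'.+1) : j < k' -> s (inr (Some (inr j))) = inr (Some (inr j)).
  move=> hj; apply: (@prof _ F s P2) => // y Py H.
  have m : P2 (inl (Some (inr j))) by rewrite /P2 /= hj.
  move: (H _ m) Py; clear H.
  case: y => [[[i|l]|]|[[i|l]|]] /=; rewrite ?eqxx //.
  by move=> /eqP [->].
have ha2 : s (inl (Some (inl ord_max))) = inl (Some (inl ord_max)).
  apply: (@prof _ F s P2) => // y Py H.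
  move: (H (inl None) isT) (H (inr None) isT) Py; clear H.
  case: y => [[[i|l]|]|[[i|l]|]] /=; rewrite ?eqxx ?orbF //.
  by rewrite /P2 /= !orbF ord_lt negbK => _ _ /eqP ->.
have hpl : s (inl (Some (inr ord_max))) = inl (Some (inr ord_max)).
  apply: (@prof _ F s P2) => // y Py H.
  move: (H (inl None) isT) (H (inr None) isT) Py; clear H.
  case: y => [[[i|l]|]|[[i|l]|]] /=; rewrite ?eqxx ?orbF //.
  by rewrite /P2 /= !orbF ord_lt negbK => _ _ /eqP ->.
pose P3 v := [|| P2 v, v == inl (Some (inl ord_max)), v == inl (Some (inr ord_max))
   | if v is inr (Some (inr j)) then j < k' else false].
have HP3 z : P3 z -> s z = z.
  move=> /or4P [/HP2 //| /eqP -> // | /eqP -> //|].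
  by case: z => [|[[//|j]|//]] // hj; apply: hq.
have hql : s (inr (Some (inr ord_max))) = inr (Some (inr ord_max)).
  apply: (@prof _ F s P3) => // y Py H.
  have m : P3 (inl (Some (inr ord_max))) by rewrite /P3 eqxx !orbT.
  move: (H _ m) Py; clear H.
  case: y => [[[i|l]|]|[[i|l]|]] /=; rewrite ?eqxx //.
  by move=> /eqP [->].
have hall y : y != inr (Some (inl ord_max)) -> s y = y.
  case: y => [[[i|j]|]|[[i|j]|]] // hy.
  - by case/orP: (ord_split i) => [hi|/eqP ->]; [apply: HS|].
  - by case/orP: (ord_split j) => [hj|/eqP ->]; [apply: HS|].
  - case/orP: (ord_split i) => [hi|/eqP hi]; first by apply: HS.
    by rewrite hi eqxx in hy.
  - by case/orP: (ord_split j) => [hj|/eqP ->]; [apply: hq|].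
apply/permP => x; rewrite perm1.
case: (eqVneq x (inr (Some (inl ord_max)))) => [->|]; last exact: hall.
exact: last_fixed.
Qed.
End GenCase.


Lemma cardI0 (X : {set 'I_0}) : #|X| = 0.
Proof. by apply/eqP; rewrite -leqn0; have := max_card X; rewrite card_ord. Qed.

Section SpecCase.
Definition g0 (x : TT 0) : TT 0 := Some (inl ord0).
Let F := functigraph (@star (LL 0)) g0.
Definition o1 : 'I_3 := @Ordinal 3 1 isT.
Definition o2 : 'I_3 := @Ordinal 3 2 isT.

Lemma low0 (S : {set TT 0 + TT 0}) : fixingb F S -> 3 <= #|S|.
Proof.
move=> HS; have := card_split S.
have hA : #|'I_3| <= #|[set i | inl (Some (inl i)) \in S]|.+1.
  apply: le_compl1 => i j; rewrite !inE => Hi Hj.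
  case: (eqVneq i j) => // ij; exfalso; exact: (swapA HS ij _ Hi Hj).
have hB : 0 < #|[set i | inr (Some (inl i)) \in S]|.
  apply/card_gt0P.
  case: (boolP (inr (Some (inl o1)) \in S)) => h1; first by exists o1; rewrite inE.
  case: (boolP (inr (Some (inl o2)) \in S)) => h2; first by exists o2; rewrite inE.
  exfalso; apply: (@swapB 0 g0 S o1 o2 HS isT _ h1 h2).
  by move=> x; rewrite /g0 tpermD.
rewrite !card_ord in hA; lia.
Qed.

Definition inS1 (v : TT 0 + TT 0) : bool :=
  match v with
  | inl (Some (inl i)) => i < 2
  | inr (Some (inl i)) => val i == 1
  | _ => false
  end.
Definition S1 := [set v | inS1 v].

Lemma cardS1 : #|S1| = 3.
Proof.
rewrite card_sumS !card_optS !card_sumS !e1 !e2 !inE /= !cardI0.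
have -> : [set i | inl (Some (inl i)) \in S1] = [set~ ord_max].
  by apply/setP => i; rewrite !inE /= ord_lt.
have -> : [set i | inr (Some (inl i)) \in S1] = [set o1].
  by apply/setP => i; rewrite !inE /= -(inj_eq val_inj).
by rewrite cardsC1 cards1 card_ord.
Qed.

Lemma fix0 : fixingb F S1.
Proof.
apply/fixingP => s Ha Hs.
have HS z : inS1 z -> s z = z by move=> h; apply: Hs; rewrite inE.
have hcB : s (inr None) = inr None.
  apply: (@prof _ F s inS1) => // y _ H.
  move: (H (inr (Some (inl o1))) isT); clear H.
  by case: y => [[[i|[]]|]|[[i|[]]|]].
pose P2 v := inS1 v || (v == inr None).
have HP2 z : P2 z -> s z = z by move=> /orP [/HS //| /eqP ->].
have hb0 : s (inr (Some (inl ord0))) = inr (Some (inl ord0)).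
  apply: (@prof _ F s P2) => // y Py H.
  move: (H (inl (Some (inl ord0))) isT) (H (inr None) isT) Py; clear H.
  case: y => [[[i|[]]|]|[[i|[]]|]] //=; by move=> /eqP [<-].
have hcA : s (inl None) = inl None.
  apply: (@prof _ F s P2) => // y Py H.
  move: (H (inl (Some (inl ord0))) isT) (H (inr None) isT) Py; clear H.
  case: y => [[[i|[]]|]|[[i|[]]|]] //=; by move=> /eqP [<-].
pose P3 v := [|| P2 v, v == inl None | v == inr (Some (inl ord0))].
have HP3 z : P3 z -> s z = z by move=> /or3P [/HP2 //| /eqP -> | /eqP ->].
have ha2 : s (inl (Some (inl ord_max))) = inl (Some (inl ord_max)).
  apply: (@prof _ F s P3) => // y Py H.
  move: (H (inl None) isT) Py; clear H.
  case: y => [[[i|[]]|]|[[i|[]]|]] //=.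
  - by rewrite /P3 /P2 /= !orbF ord_lt negbK => _ /eqP ->.
  - by move=> /eqP [<-]; rewrite /P3 eqxx !orbT.
have hall y : y != inr (Some (inl ord_max)) -> s y = y.
  case: y => [[[i|[]]|]|[[i|[]]|]] // hy.
  - by case/orP: (ord_split i) => [hi|/eqP ->]; [apply: HS|].
  - case: i hy => [[|[|[|//]]] hi] hy.
    + by have -> : Ordinal hi = ord0 by apply: val_inj.
    + by apply: HS.
    + have e : Ordinal hi = ord_max by apply: val_inj.
      by rewrite e eqxx in hy.
apply/permP => x; rewrite perm1.
case: (eqVneq x (inr (Some (inl ord_max)))) => [->|]; last exact: hall.
exact: last_fixed.
Qed.
End SpecCase.


Theorem lemma2p7 (t1 : nat) (ht1 : 2 <= t1) :
  exists (T : finType) (e : rel T) (g : T -> T),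
    simple_graph e /\ connected_graph e /\
    fixn e = t1 /\ fixn (functigraph e g) = t1.+1.
Proof.
case: t1 ht1 => [|[|[|k']]] // _.
- exists (option (LL 0)), (@star (LL 0)), g0.
  split; first exact: star_simple.
  split; first exact: star_conn.
  split.
  + rewrite (@star_fix _ (inl ord0) (inl o1)) //.
    by rewrite card_sum !card_ord.
  + apply: fixn_eq; first by exists S1; rewrite cardS1 fix0.
    exact: low0.
- exists (option (LL k'.+1)), (@star (LL k'.+1)), (@g1 k').
  split; first exact: star_simple.
  split; first exact: star_conn.
  split.
  + rewrite (@star_fix _ (inl ord0) (inl o1)) //.
    by rewrite card_sum !card_ord addnS.
  + apply: fixn_eq; first by exists (S0 k'); rewrite cardS0 fix1.
    exact: low1.
Qed.
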